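(* Let $(\mathfrak D,d)$ be a finite metric space, $p\in(1,\infty)$, $\vartheta\in\mathcal P(\mathfrak D)$, $\{\mu_k\}_{k\in\mathbb{N}}$ a countable dense subset of $(\mathcal P(\mathfrak D),W_p)$, and for each $k$ let $(\varphi_k,\psi_k)$ be functions on $\mathfrak D$ with $\psi_k=\varphi_k^c$, $\varphi_k=\psi_k^c$ and $W_p^p(\vartheta,\mu_k)=\int\varphi_k\,d\mu_k+\int\psi_k\,d\vartheta$. With $G_I(\mu):=\max_{k\in I}(\int\varphi_kd\mu+\int\psi_kd\vartheta)$ and $F(\mu):=W_p^p(\vartheta,\mu)$, \[\sup_{\mu\in\mathcal P(\mathfrak D)}|F(\mu)-G_{\{1,\dots,j\}}(\mu)|\to0\qquad\text{as }j\to\infty.\]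
   Context: $\mathcal P(\mathfrak D)$ is the set of probability measures on $\mathfrak D$, $W_p$ the $p$-Wasserstein distance with cost $d^p$; $\varphi^c(x):=\inf_{y\in\mathfrak D}(d(x,y)^p-\varphi(y))$. *)

(* Defs.v *)
From HB Require Import structures.
From mathcomp Require Import all_boot all_order all_algebra.
From mathcomp Require Import all_classical all_reals all_analysis.
Set Implicit Arguments. Unset Strict Implicit. Unset Printing Implicit Defensive.
Import Order.TTheory GRing.Theory Num.Theory.
Local Open Scope classical_set_scope.
Local Open Scope ring_scope.

Section Defs.
Variables (R : realType) (T : finType).

Definition is_metric (d : T -> T -> R) : Prop :=
  [/\ forall x y, 0 <= d x y,
      forall x y, d x y = 0 <-> x = y,
      forall x y, d x y = d y x &
      forall x y z, d x z <= d x y + d y z].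

Definition is_prob (mu : T -> R) : Prop :=
  (forall x, 0 <= mu x) /\ \sum_x mu x = 1.

Definition Prob : set (T -> R) := [set mu | is_prob mu].

Definition integ (f : T -> R) (mu : T -> R) : R := \sum_x f x * mu x.

Definition coupling (mu nu : T -> R) : set (T -> T -> R) :=
  [set pi | (forall x y, 0 <= pi x y) /\
            (forall x, \sum_y pi x y = mu x) /\
            (forall y, \sum_x pi x y = nu y)].

Definition Wpp (d : T -> T -> R) (p : R) (mu nu : T -> R) : R :=
  inf [set \sum_x \sum_y pi x y * (d x y `^ p) | pi in coupling mu nu].

Definition Wp (d : T -> T -> R) (p : R) (mu nu : T -> R) : R :=
  Wpp d p mu nu `^ (p^-1).

Definition ctrans (d : T -> T -> R) (p : R) (phi : T -> R) : T -> R :=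
  fun x => inf [set d x y `^ p - phi y | y in [set: T]].

End Defs.

(* Main.v *)
Require Import Defs.
From HB Require Import structures.
From mathcomp Require Import all_boot all_order all_algebra.
From mathcomp Require Import all_classical all_reals all_analysis.
From mathcomp Require Import ring lra.
Import Order.TTheory GRing.Theory Num.Theory numFieldNormedType.Exports.
Local Open Scope classical_set_scope.
Local Open Scope ring_scope.

Section Helpers.
Variables (R : realType) (T : finType) (d : T -> T -> R) (p : R).

Definition cost (pi : T -> T -> R) := \sum_x \sum_y pi x y * (d x y `^ p).
Definition L1 (mu nu : T -> R) := \sum_x `|mu x - nu x|.

Lemma cost_ge0 pi : (forall x y, 0 <= pi x y) -> 0 <= cost pi.
Proof.
move=> h; apply: sumr_ge0 => x _; apply: sumr_ge0 => y _.
by apply: mulr_ge0 => //; apply: powR_ge0.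
Qed.

Lemma coupling_prod (mu nu : T -> R) : is_prob mu -> is_prob nu ->
  coupling mu nu (fun x y => mu x * nu y).
Proof.
move=> [m0 m1] [n0 n1]; split; first by move=> x y; apply: mulr_ge0.
split=> x; first by rewrite -mulr_sumr n1 mulr1.
by rewrite -mulr_suml m1 mul1r.
Qed.

Lemma Wpp_ge (mu nu : T -> R) b : is_prob mu -> is_prob nu ->
  (forall pi, coupling mu nu pi -> b <= cost pi) -> b <= Wpp d p mu nu.
Proof.
move=> hm hn h; apply: lb_le_inf.
  by exists (cost (fun x y => mu x * nu y)); exists (fun x y => mu x * nu y) => //; exact: coupling_prod.
by move=> _ [pi hpi <-]; exact: h.
Qed.

Lemma Wpp_le (mu nu : T -> R) pi : coupling mu nu pi -> Wpp d p mu nu <= cost pi.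
Proof.
move=> hpi; apply: ge_inf; last by exists pi.
exists 0 => _ [q [hq _] <-]; exact: cost_ge0.
Qed.

Lemma Wpp_ge0 (mu nu : T -> R) : is_prob mu -> is_prob nu -> 0 <= Wpp d p mu nu.
Proof. by move=> hm hn; apply: Wpp_ge => // pi [h _]; apply: cost_ge0. Qed.

Lemma le_sum1 (F : T -> R) j : (forall i, 0 <= F i) -> F j <= \sum_i F i.
Proof. by move=> h; rewrite (bigD1 j) //= lerDl sumr_ge0. Qed.

Lemma ctrans_le (phi : T -> R) x y : ctrans d p phi x <= d x y `^ p - phi y.
Proof.
apply: ge_inf; last by exists y.
exists (- \sum_z `|d x z `^ p - phi z|) => _ [z _ <-].
rewrite lerNl; apply: le_trans (le_sum1 _ z _) => //.
by rewrite -normrN ler_norm.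
Qed.


Lemma G_le_F (phi psi theta nu : T -> R) :
  psi = ctrans d p phi -> is_prob theta -> is_prob nu ->
  integ phi nu + integ psi theta <= Wpp d p theta nu.
Proof.
move=> hpsi ht hn; apply: Wpp_ge => // pi [p0 [p1 p2]].
have -> : integ phi nu = \sum_x \sum_y pi x y * phi y.
  rewrite /integ exchange_big /=; apply: eq_bigr => y _.
  by rewrite -p2 mulr_sumr; apply: eq_bigr => x _; rewrite mulrC.
have -> : integ psi theta = \sum_x \sum_y pi x y * psi x.
  rewrite /integ; apply: eq_bigr => x _.
  by rewrite -p1 mulr_sumr; apply: eq_bigr => y _; rewrite mulrC.
rewrite -big_split /=; apply: ler_sum => x _; rewrite -big_split /=.
apply: ler_sum => y _; rewrite -mulrDr; apply: ler_wpM2l => //.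
by rewrite hpsi addrC -lerBrDr ctrans_le.
Qed.

Lemma osc (phi psi : T -> R) D : phi = ctrans d p psi ->
  (forall x y, 0 <= d x y `^ p <= D) -> forall y y', phi y - phi y' <= D.
Proof.
move=> hphi hD y y'; rewrite lerBlDr -lerBlDl hphi {2}/ctrans; apply: lb_le_inf.
  by exists (d y' y `^ p - psi y); exists y.
move=> _ [x _ <-]; rewrite lerBlDl.
apply: le_trans (ctrans_le _ y x) _.
have /andP[_ h1] := hD y x; have /andP[h2 _] := hD y' x.
rewrite addrA lerD2r; apply: (le_trans h1); by rewrite lerDl.
Qed.

Lemma integ_diff (f mu nu : T -> R) D (y0 : T) : (forall y y', f y - f y' <= D) ->
  is_prob mu -> is_prob nu -> integ f mu - integ f nu <= D * L1 mu nu.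
Proof.
move=> hf [_ m1] [_ n1].
have -> : integ f mu - integ f nu = \sum_x (f x - f y0) * (mu x - nu x).
  have e : \sum_x (f x - f y0) * (mu x - nu x) =
     \sum_x f x * (mu x - nu x) - f y0 * \sum_x (mu x - nu x).
    by rewrite mulr_sumr -sumrB; apply: eq_bigr => x _; rewrite mulrBl.
  have s0 : \sum_x (mu x - nu x) = 0 by rewrite sumrB m1 n1 subrr.
  rewrite e s0 mulr0 subr0 /integ -sumrB; apply: eq_bigr => x _.
  by rewrite mulrBr.
rewrite /L1 mulr_sumr; apply: ler_sum => x _.
apply: le_trans (ler_norm _) _; rewrite normrM ler_wpM2r //.
rewrite ler_norml hf andbT lerNl opprB; exact: hf.
Qed.

Lemma glue (theta mu nu : T -> R) D : is_prob theta -> is_prob mu -> is_prob nu ->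
  (forall x y, 0 <= d x y `^ p <= D) -> 0 <= D ->
  Wpp d p theta nu <= Wpp d p theta mu + D * L1 mu nu.
Proof.
move=> ht hm hn hD hD0; rewrite -lerBlDr; apply: Wpp_ge => // pi [p0 [p1 p2]].
rewrite lerBlDr.
move: (ht) (hm) (hn) => [t0 t1] [m0 m1] [n0 n1].
pose a y := Num.min (mu y) (nu y).
pose r y := a y / mu y.
pose u x := \sum_y pi x y * (1 - r y).
pose v y := nu y - a y.
pose m := \sum_y v y.
have a0 y : 0 <= a y by rewrite /a le_min m0 n0.
have v0 y : 0 <= v y by rewrite /v subr_ge0 /a ge_min lexx orbT.
have r0 y : 0 <= r y by rewrite /r divr_ge0.
have r1 y : r y <= 1.
  rewrite /r; have [->|mz] := eqVneq (mu y) 0; first by rewrite invr0 mulr0.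
  by rewrite ler_pdivrMr ?lt_def ?mz ?m0 // mul1r /a ge_min lexx.
have mr y : mu y * r y = a y.
  have [mz|mz] := eqVneq (mu y) 0.
    by rewrite mz mul0r /a mz; apply/esym/min_idPl; exact: n0.
  by rewrite mulrC /r divfK.
have u0 x : 0 <= u x.
  by apply: sumr_ge0 => y _; rewrite mulr_ge0 // subr_ge0.
have su : \sum_x u x = m.
  rewrite /u exchange_big /= /m /v sumrB n1.
  under eq_bigr => y _ do rewrite -mulr_suml p2 mulrBr mulr1 mr.
  by rewrite sumrB m1.
have m0' : 0 <= m by apply: sumr_ge0.
have uK x : u x * (m / m) = u x.
  have [mz|mz] := eqVneq m 0; last by rewrite divff // mulr1.
  have := psumr_eq0P (P := predT) (fun i _ => u0 i); rewrite su => /(_ mz x isT).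
  by move=> ->; rewrite mul0r.
have vK y : v y * (m / m) = v y.
  have [mz|mz] := eqVneq m 0; last by rewrite divff // mulr1.
  have := psumr_eq0P (P := predT) (fun i _ => v0 i); rewrite /m in mz *.
  by move=> /(_ mz y isT) ->; rewrite mul0r.
pose pi' x y := pi x y * r y + u x * v y / m.
have hpi' : coupling theta nu pi'.
  split; first by move=> x y; rewrite addr_ge0 ?mulr_ge0 ?invr_ge0.
  split=> [x|y]; rewrite /pi' big_split /=.
    have -> : \sum_y pi x y * r y = theta x - u x.
      rewrite /u -p1 -sumrB; apply: eq_bigr => y _; rewrite mulrBr mulr1.
      by rewrite opprB addrCA subrr addr0.
    rewrite -mulr_suml -mulr_sumr -/m -mulrA uK.
    by rewrite subrK.
  rewrite -mulr_suml p2 mr -mulr_suml -mulr_suml su mulrAC mulrC vK /v.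
  by rewrite addrC subrK.
apply: le_trans (@Wpp_le _ _ _ hpi') _.
have mL : m <= L1 mu nu.
  rewrite /m /L1; apply: ler_sum => y _; rewrite /v /a.
  have [h|h] := leP (mu y) (nu y).
    by rewrite distrC ler_norm.
  by rewrite subrr.
apply: (@le_trans _ _ (\sum_x \sum_y (pi x y * d x y `^ p + u x * v y / m * D))).
  apply: ler_sum => x _; apply: ler_sum => y _; rewrite /pi' mulrDl; apply: lerD.
    by rewrite ler_wpM2r ?powR_ge0 // ler_piMr.
  by rewrite ler_wpM2l ?mulr_ge0 ?invr_ge0 //; have /andP[] := hD x y.
have e : \sum_x \sum_y (u x * v y / m * D) = D * m.
  under eq_bigr => x _ do rewrite -mulr_suml -mulr_suml -mulr_sumr -/m.
  rewrite -mulr_suml -mulr_suml -mulr_suml su.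
  have [->|mz] := eqVneq m 0; first by rewrite !(mul0r, mulr0).
  by rewrite mulfK // mulrC.
under eq_bigr => x _ do rewrite big_split.
rewrite big_split /= e; apply: lerD; first exact: lexx.
by rewrite ler_wpM2l.
Qed.

Lemma Wpp_L1 (mu nu : T -> R) c : is_prob mu -> is_prob nu -> 0 <= c ->
  (forall x y, x != y -> c <= d x y `^ p) -> c / 2 * L1 mu nu <= Wpp d p mu nu.
Proof.
move=> hm hn c0 hc; apply: Wpp_ge => // pi [p0 [p1 p2]].
pose o x y := if x == y then 0 else pi x y.
have o0 x y : 0 <= o x y by rewrite /o; case: eqP.
pose S := \sum_x \sum_y o x y.
have h1 : L1 mu nu <= S + S.
  have -> : S + S = \sum_x \sum_y (o x y + o y x).
    under [RHS]eq_bigr => x _ do rewrite big_split.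
    by rewrite big_split /=; congr (_ + _); rewrite /S exchange_big.
  rewrite /L1; apply: ler_sum => x _.
  have -> : mu x - nu x = \sum_y (o x y - o y x).
    rewrite -p1 -p2 -sumrB; apply: eq_bigr => y _; rewrite /o.
    by case: (eqVneq x y) => [->|ne]; rewrite ?subrr.
  apply: le_trans (ler_norm_sum _ _ _) _; apply: ler_sum => y _.
  by apply: le_trans (ler_normB _ _) _; rewrite !ger0_norm.
apply: (@le_trans _ _ (c / 2 * (S + S))); first by rewrite ler_wpM2l ?divr_ge0.
have -> : c / 2 * (S + S) = c * S.
  by rewrite mulrDr -mulrDl -splitr.
rewrite /S /cost mulr_sumr; apply: ler_sum => x _; rewrite mulr_sumr.
apply: ler_sum => y _; rewrite /o; case: (eqVneq x y) => [->|ne].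
  by rewrite mulr0 mulr_ge0 ?powR_ge0.
by rewrite mulrC ler_wpM2l // hc.
Qed.

Lemma L1C (mu nu : T -> R) : L1 mu nu = L1 nu mu.
Proof. by apply: eq_bigr => x _; rewrite distrC. Qed.

Lemma max_ge x0 j : forall (f : nat -> R) k, (k <= j)%N ->
  f k <= \big[Num.max/x0]_(i < j.+1) f i.
Proof.
elim: j => [|j IH] f k hk.
  move: hk; rewrite leqn0 => /eqP ->.
  by rewrite big_ord_recl big_ord0 le_max lexx.
rewrite big_ord_recl le_max; case: k hk => [|k] hk; first by rewrite lexx.
apply/orP; right.
have -> : \big[Num.max/x0]_(i < j.+1) f (lift ord0 i) =
          \big[Num.max/x0]_(i < j.+1) (fun n => f n.+1) i.
  by apply: eq_bigr => i _; rewrite lift0.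
exact: (IH (fun n => f n.+1) k hk).
Qed.

Lemma max_le (f : nat -> R) x0 j b : x0 <= b -> (forall k, f k <= b) ->
  \big[Num.max/x0]_(i < j.+1) f i <= b.
Proof.
move=> h0 hf; apply: (big_ind (fun x => x <= b)) => //.
by move=> x y hx hy; rewrite ge_max hx hy.
Qed.

Lemma dense_L1 (mu : nat -> T -> R) c :
  1 < p -> 0 < c -> (forall x y, x != y -> c <= d x y `^ p) ->
  (forall k, is_prob (mu k)) ->
  (forall nu, is_prob nu -> forall eps : R, 0 < eps ->
     exists k, Wp d p nu (mu k) < eps) ->
  forall nu, is_prob nu -> forall eta : R, 0 < eta -> exists k, L1 (mu k) nu < eta.
Proof.
move=> hp c0 hc hmu hd nu hn eta he.
have ce : 0 < c / 2 * eta by rewrite mulr_gt0 ?divr_gt0.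
have [k hk] := hd nu hn _ (powR_gt0 (p^-1) ce).
exists k; rewrite L1C.
have hW : Wpp d p nu (mu k) < c / 2 * eta.
  rewrite ltNge; apply/negP => hle; move: hk; apply/negP; rewrite -leNgt /Wp.
  apply: ge0_ler_powR => //; first by rewrite invr_ge0 (le_trans _ (ltW hp)).
    by rewrite nnegrE ltW.
  by rewrite nnegrE Wpp_ge0.
have := le_lt_trans (@Wpp_L1 _ _ _ hn (hmu k) (ltW c0) hc) hW.
by rewrite ltr_pM2l // divr_gt0.
Qed.

End Helpers.
Arguments L1 {R T}.


Theorem corollaryB7 (R : realType) (T : finType) (d : T -> T -> R) (p : R)
  (theta : T -> R) (mu : nat -> T -> R) (phi psi : nat -> T -> R) :
  is_metric d -> 1 < p -> is_prob theta ->
  (forall k, is_prob (mu k)) ->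
  (forall nu, is_prob nu -> forall eps : R, 0 < eps ->
     exists k, Wp d p nu (mu k) < eps) ->
  (forall k, psi k = ctrans d p (phi k)) ->
  (forall k, phi k = ctrans d p (psi k)) ->
  (forall k, Wpp d p theta (mu k) = integ (phi k) (mu k) + integ (psi k) theta) ->
  let G := fun (j : nat) (nu : T -> R) =>
    \big[Num.max/integ (phi 0%N) nu + integ (psi 0%N) theta]_(k < j.+1)
       (integ (phi k) nu + integ (psi k) theta) in
  (fun j : nat => sup [set `| Wpp d p theta nu - G j nu | | nu in Prob (R:=R) (T:=T)])
    @ \oo --> 0.

Proof.
move=> hmet hp ht hmu hdense hpsi hphi hF G.
case: hmet => hd0 hd1 hdsym _.
have [y0 _] : exists y0 : T, True.
  case: (boolP [exists x : T, true]) => [/existsP [y _]|/existsPn h]; first by exists y.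
  have := ht.2; rewrite big1 => [/eqP|x _]; first by rewrite eq_sym oner_eq0.
  by have := h x.
pose D := \sum_x \sum_y d x y `^ p.
have hD x y : 0 <= d x y `^ p <= D.
  rewrite powR_ge0 /=.
  apply: le_trans (@le_sum1 R T (fun y => d x y `^ p) y _) _ => [y'|]; first exact: powR_ge0.
  apply: (@le_sum1 R T (fun x => \sum_y d x y `^ p) x) => x'.
  by apply: sumr_ge0 => *; exact: powR_ge0.
have D0 : 0 <= D by have /andP[h1 h2] := hD y0 y0; exact: le_trans h1 h2.
pose S := \sum_x \sum_y (d x y `^ p)^-1.
have S0 : 0 <= S by apply: sumr_ge0 => x _; apply: sumr_ge0 => y _; rewrite invr_ge0 powR_ge0.
pose c := (1 + S)^-1.
have c0 : 0 < c by rewrite /c invr_gt0; lra.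
have hc x y : x != y -> c <= d x y `^ p.
  move=> ne; have dpos : 0 < d x y `^ p.
    apply: powR_gt0; rewrite lt_def hd0 andbT; apply/eqP => h.
    by move: ne; rewrite (proj1 (hd1 x y) h) eqxx.
  have hS : (d x y `^ p)^-1 <= S.
    apply: le_trans (@le_sum1 R T (fun y => (d x y `^ p)^-1) y _) _ => [y'|].
      by rewrite invr_ge0 powR_ge0.
    apply: (@le_sum1 R T (fun x => \sum_y (d x y `^ p)^-1) x) => x'.
    by apply: sumr_ge0 => *; rewrite invr_ge0 powR_ge0.
  rewrite /c -[d x y `^ p]invrK lef_pV2 ?posrE ?invr_gt0 //; last by lra.
  lra.
have key nu k j : is_prob nu -> (k <= j)%N ->
    0 <= Wpp d p theta nu - G j nu <= D * L1 (mu k) nu + D * L1 (mu k) nu.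
  move=> hn hkj; apply/andP; split.
    rewrite subr_ge0 /G; apply: (@max_le R (fun k0 : nat => integ (phi k0) nu + integ (psi k0) theta)) => [|k']; exact: (@G_le_F R T d p _ _ theta nu (hpsi _) ht hn).
  have h1 : integ (phi k) nu + integ (psi k) theta <= G j nu.
    exact: (@max_ge R (integ (phi 0%N) nu + integ (psi 0%N) theta) j
             (fun k0 : nat => integ (phi k0) nu + integ (psi k0) theta) k hkj).
  have h2 := @glue R T d p theta (mu k) nu D ht (hmu k) hn hD D0.
  have h3 := @integ_diff R T (phi k) (mu k) nu D y0
               (@osc R T d p (phi k) (psi k) D (hphi k) hD) (hmu k) hn.
  have h4 := hF k.
  lra.
apply/cvgr0Pnorm_le => eps he.
pose eta := eps / (D + D + 1).
have eta0 : 0 < eta by rewrite /eta divr_gt0 //; lra.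
have etaE : (D + D) * eta <= eps.
  have -> : eps = (D + D + 1) * eta by rewrite /eta mulrC divfK //; apply/eqP; lra.
  rewrite ler_wpM2r; [by [] | exact: ltW | lra].
pose N := (Num.truncn (4 * #|T|%:R / eta)).+1.
have N0 : 0 < N%:R :> R by rewrite ltr0n.
have hN : #|T|%:R * (2 / N%:R) <= eta / 2.
  have h := truncnS_gt (4 * #|T|%:R / eta); rewrite -/N in h.
  move: h; rewrite ltr_pdivrMr // => h.
  rewrite mulrA ler_pdivrMr //; lra.
pose close (g : {ffun T -> 'I_N.+1}) (nu : T -> R) :=
  forall x, `|nu x - (g x : nat)%:R / N%:R| <= N%:R^-1.
have hk g : exists k, (exists nu, is_prob nu /\ close g nu) ->
    exists nu, [/\ is_prob nu, close g nu & L1 (mu k) nu < eta / 2].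
  case: (pselect (exists nu, is_prob nu /\ close g nu)) => [[nu [hn hc']]|hno].
    have [k hk] := @dense_L1 R T d p mu c hp c0 hc hmu hdense nu hn (eta / 2)
      (divr_gt0 eta0 (ltr0Sn R 1)).
    by exists k => _; exists nu.
  by exists 0%N => /hno.
pose kf g := projT1 (cid (hk g)).
pose J := (\max_(g : {ffun T -> 'I_N.+1}) kf g)%N.
exists J => // j /= hJj.
have ub : ubound [set `|Wpp d p theta nu - G j nu| | nu in Prob (R:=R) (T:=T)] eps.
  move=> _ [nu hn <-]; rewrite /Prob /= in hn.
  have nu1 x : nu x <= 1.
    by rewrite -hn.2; apply: (@le_sum1 R T nu x) => y; exact: hn.1.
  pose g : {ffun T -> 'I_N.+1} := [ffun x => inord (Num.truncn (N%:R * nu x))].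
  have cg : close g nu.
    move=> x; rewrite ffunE inordK; last first.
      rewrite ltnS truncn_le_nat; apply: le_lt_trans (_ : _ <= N%:R * 1) _.
        by rewrite ler_wpM2l ?nu1 // ltW.
      by rewrite mulr1 ltr_nat.
    have z0 : 0 <= N%:R * nu x by rewrite mulr_ge0 ?hn.1 // ltW.
    have /andP[t1 t2] := truncn_itv z0; rewrite -natr1 in t2.
    set t := Num.truncn _ in t1 t2 *.
    have -> : nu x - t%:R / N%:R = (N%:R * nu x - t%:R) / N%:R.
      by field; rewrite lt0r_neq0.
    rewrite normrM [X in _ * X]ger0_norm ?invr_ge0 ?ler0n //.
    apply: ler_piMl; first by rewrite invr_ge0 ler0n.
    rewrite ler_norml; apply/andP; split; lra.
  have [nu' [hn' cg' hL]] := projT2 (cid (hk g)) (ex_intro _ nu (conj hn cg)).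
  have kJ : (kf g <= j)%N := leq_trans (leq_bigmax g) hJj.
  have /andP[k1 k2] := key nu (kf g) j hn kJ.
  have hL2 : L1 nu' nu <= #|T|%:R * (2 / N%:R).
    rewrite /L1 (_ : #|T|%:R * (2 / N%:R) = \sum_(x : T) (2 / N%:R)); last first.
      by rewrite sumr_const mulr_natl.
    apply: ler_sum => x _; apply: le_trans (ler_distD ((g x : nat)%:R / N%:R) _ _) _.
    rewrite [X in _ + X]distrC; apply: le_trans (lerD (cg' x) (cg x)) _.
    by rewrite (_ : 2 / N%:R = N%:R^-1 + N%:R^-1) //; ring.
  have hL' : L1 (mu (kf g)) nu' < eta / 2 := hL.
  have tri : L1 (mu (kf g)) nu <= L1 (mu (kf g)) nu' + L1 nu' nu.
    rewrite /L1 -big_split /=; apply: ler_sum => x _; exact: ler_distD.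
  have hLe : L1 (mu (kf g)) nu <= eta by lra.
  rewrite ger0_norm //; apply: le_trans k2 _; apply: le_trans etaE.
  by rewrite mulrDl; apply: lerD; rewrite ler_wpM2l.
set E := [set _ | _ in _] in ub *.
have ne : E !=set0.
  by exists `|Wpp d p theta theta - G j theta|; exists theta.
have s1 := ge_sup ne ub.
have s0 : 0 <= sup E.
  apply: le_trans (sup_upper_bound (conj ne (ex_intro _ eps ub)) _).
    exact: (normr_ge0 (Wpp d p theta theta - G j theta)).
  by exists theta.
by rewrite ger0_norm.
Qed.
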